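(* Let $\{c_n\}_{n\ge0}$ be a real sequence with $\{c_n\}\in NBVS$, and suppose $f(x)=\sum_{n=0}^\infty c_n\cos nx$ converges for every $x$ and $f\in C_{2\pi}$. Let $S_n(f,x)=\sum_{k=0}^nc_k\cos kx$. If $$\sum_{k=n+1}^{2n}c_k=O\Big(\max_{1\le k\le n}kc_{n+k}\Big)\quad(n\to\infty),$$ then $\|f-S_n(f)\|=O(E_n(f))$.
   Context: For $\theta_0\in[0,\pi/2)$ let $M(\theta_0)=\{z\in\mathbb C: |\arg z|\le\theta_0\}$ (with $0\in M(\theta_0)$). Write $\Delta c_n=c_n-c_{n+1}$. A complex sequence $\mathbf C=\{c_n\}$ belongs to $NBVS$ if there is $\theta_0\in[0,\pi/2)$ with $c_n\in M(\theta_0)$ for all $n\ge1$ and a constant $K(\mathbf C)>0$ such that $\sum_{n=m}^{2m}|\Delta c_n|\le K(\mathbf C)\big(|c_m|+|c_{2m}|\big)$ for all $m\ge1$ (so a real sequence in $NBVS$ is nonnegative for $n\ge1$). $C_{2\pi}$ is the space of continuous $2\pi$-periodic functions with $\|g\|=\max_x|g(x)|$; $E_n(f)$ is the best uniform approximation of $f$ by trigonometric polynomials of degree at most $n$. *)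

(* Defs.v *)
From Stdlib Require Import Reals List.
From Coquelicot Require Import Coquelicot.
Open Scope R_scope.

(* M(theta0) = { z : |arg z| <= theta0 } together with 0.  Since theta0 < pi/2,
   |arg z| <= theta0 for z <> 0 means z = r e^{i theta} with r > 0, |theta| <= theta0. *)
Definition inM (theta0 : R) (z : C) : Prop :=
  z = 0%C \/
  exists r th : R, 0 < r /\ Rabs th <= theta0 /\ z = (r * cos th, r * sin th)%R.

(* NBVS for a complex sequence c (indexed from 0; conditions for n, m >= 1). *)
Definition NBVS (c : nat -> C) : Prop :=
  (exists theta0 : R, 0 <= theta0 < PI / 2 /\
     forall n : nat, (1 <= n)%nat -> inM theta0 (c n)) /\
  (exists K : R, 0 < K /\
     forall m : nat, (1 <= m)%nat ->
       sum_n_m (fun n => Cmod (c n - c (S n))%C) m (2 * m)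
         <= K * (Cmod (c m) + Cmod (c (2 * m)%nat))).

Definition supnorm (g : R -> R) : Rbar :=
  Lub_Rbar (fun y => exists x : R, y = Rabs (g x)).

Definition trig_poly (n : nat) (T : R -> R) : Prop :=
  exists a b : nat -> R, forall x : R,
    T x = a O + sum_n_m (fun k => a k * cos (INR k * x) + b k * sin (INR k * x)) 1 n.

Definition En (n : nat) (f : R -> R) : Rbar :=
  Glb_Rbar (fun e => exists T, trig_poly n T /\ supnorm (fun x => f x - T x) = Finite e).

Definition Sn (c : nat -> R) (n : nat) (x : R) : R :=
  sum_n (fun k => c k * cos (INR k * x)) n.

Definition maxkc (c : nat -> R) (n : nat) : R :=
  fold_right Rmax (c (S n)) (map (fun k => INR k * c (n + k)%nat) (seq 1 n)).

(* Main.v *)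
Require Import Defs.
From Stdlib Require Import Reals List.
From Coquelicot Require Import Coquelicot.
From Stdlib Require Import Lia Lra ZArith Znumtheory.
Open Scope R_scope.

Fixpoint sm (n:nat) (f:nat->R) : R := match n with O => 0 | S n => sm n f + f n end.

Lemma sm_ext n f g : (forall i, (i < n)%nat -> f i = g i) -> sm n f = sm n g.
Proof. induction n; simpl; intros H; auto. rewrite IHn by (intros; apply H; lia). rewrite H by lia. auto. Qed.

Lemma sm_plus n f g : sm n (fun i => f i + g i) = sm n f + sm n g.
Proof. induction n; simpl; [lra|]. rewrite IHn; lra. Qed.

Lemma sm_scal n a f : sm n (fun i => a * f i) = a * sm n f.
Proof. induction n; simpl; [lra|]. rewrite IHn; lra. Qed.

Lemma sm_le n f g : (forall i, (i<n)%nat -> f i <= g i) -> sm n f <= sm n g.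
Proof. induction n; simpl; intros H; [lra|]. assert (f n <= g n) by (apply H; lia).
 assert (sm n f <= sm n g) by (apply IHn; intros; apply H; lia). lra. Qed.

Lemma sm_nonneg n f : (forall i, (i<n)%nat -> 0 <= f i) -> 0 <= sm n f.
Proof. intros H. replace 0 with (sm n (fun _ => 0)). apply sm_le; auto.
 induction n; simpl; auto. rewrite IHn; [lra| intros; apply H; lia]. Qed.

Lemma sm_abs n f : Rabs (sm n f) <= sm n (fun i => Rabs (f i)).
Proof. induction n; simpl. rewrite Rabs_R0; lra.
 eapply Rle_trans. apply Rabs_triang. lra. Qed.

Lemma sm_split p q f : sm (p+q) f = sm p f + sm q (fun i => f (p+i)%nat).
Proof. induction q; simpl. rewrite Nat.add_0_r; lra. rewrite Nat.add_succ_r. simpl. rewrite IHq. lra. Qed.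

Lemma sm_swap n m F : sm n (fun i => sm m (fun j => F i j)) = sm m (fun j => sm n (fun i => F i j)).
Proof. induction n; simpl.
 - induction m; simpl; auto; rewrite <- IHm; lra.
 - rewrite IHn. rewrite <- sm_plus. auto. Qed.

Lemma sm_shift n f : sm (S n) f = f O + sm n (fun i => f (S i)).
Proof. induction n; simpl. lra. simpl in IHn. rewrite IHn. lra. Qed.

Lemma sm_rev n f : sm n f = sm n (fun i => f (n-1-i)%nat).
Proof. induction n; auto. rewrite (sm_shift n (fun i => f (S n - 1 - i)%nat)).
 simpl sm at 1. rewrite IHn.
 replace (S n - 1 - 0)%nat with n by lia.
 rewrite (sm_ext n (fun i : nat => f (n - 1 - i)%nat) (fun i => f (S n - 1 - S i)%nat)).
 lra. intros; f_equal; lia. Qed.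

Lemma sm_single n j f : (j<n)%nat -> (forall i, (i<n)%nat -> 0 <= f i) -> f j <= sm n f.
Proof. induction n; intros Hj H; simpl. lia.
 destruct (Nat.eq_dec j n). subst. assert (0 <= sm n f) by (apply sm_nonneg; intros; apply H; lia). lra.
 assert (f j <= sm n f) by (apply IHn; [lia| intros; apply H; lia]). assert (0 <= f n) by (apply H; lia). lra. Qed.

Lemma sm_const n a : sm n (fun _ => a) = INR n * a.
Proof. induction n; simpl sm. simpl; lra. rewrite IHn, S_INR. lra. Qed.

Lemma sm_zero n f : (forall i, (i<n)%nat -> f i = 0) -> sm n f = 0.
Proof. intros H. rewrite (sm_ext n f (fun _ => 0)) by auto. rewrite sm_const; lra. Qed.

Lemma sm_ind s k : sm s (fun a => if Nat.eqb (S a) k then 1 else 0) = if andb (Nat.leb 1 k) (Nat.leb k s) then 1 else 0.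
Proof. induction s; cbn [sm].
 - destruct k; simpl; auto.
 - rewrite IHs. destruct (Nat.eqb_spec (S s) k).
   + subst. replace (andb (Nat.leb 1 (S s)) (Nat.leb (S s) s)) with false.
     replace (andb (Nat.leb 1 (S s)) (Nat.leb (S s) (S s))) with true. lra.
     rewrite Nat.leb_refl. simpl. reflexivity.
     replace (Nat.leb (S s) s) with false. rewrite Bool.andb_false_r; auto. symmetry. apply Nat.leb_gt. lia.
   + destruct (Nat.leb 1 k) eqn:E1; destruct (Nat.leb k s) eqn:E2; destruct (Nat.leb k (S s)) eqn:E3; simpl; try lra;
     (apply Nat.leb_le in E2 || apply Nat.leb_gt in E2); (apply Nat.leb_le in E3 || apply Nat.leb_gt in E3); lia. Qed.

Lemma sum_n_m_sm f m n : sum_n_m f m n = sm (S n - m) (fun i => f (m+i)%nat).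
Proof. induction n.
 - destruct m. rewrite sum_n_n. simpl. lra. rewrite sum_n_m_zero by lia. simpl. reflexivity.
 - destruct (le_lt_dec m (S n)).
   + rewrite sum_n_Sm by lia. rewrite IHn. replace (S (S n) - m)%nat with (S (S n - m)) by lia. cbn [sm].
     replace (m + (S n - m))%nat with (S n) by lia. reflexivity.
   + rewrite sum_n_m_zero by lia. replace (S (S n) - m)%nat with O by lia. reflexivity. Qed.

Lemma sum_n_sm f n : sum_n f n = sm (S n) f.
Proof. unfold sum_n. rewrite sum_n_m_sm. replace (S n - 0)%nat with (S n) by lia. apply sm_ext. intros; f_equal; lia. Qed.

Definition cz (p:Z) (x:R) := cos (IZR p * x).
Definition sz (p:Z) (x:R) := sin (IZR p * x).
Definition xg (M j:nat) := 2*PI*INR j / INR M.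
Definition Av (M:nat) (h:R->R) := sm M (fun j => h (xg M j)) / INR M.

Lemma tele_cos th M : 2*sin(th/2) * sm M (fun j => cos(INR j*th)) = sin(INR M*th - th/2) + sin(th/2).
Proof. induction M. simpl. replace (0*th - th/2) with (-(th/2)) by ring. rewrite sin_neg. lra.
 cbn[sm]. rewrite Rmult_plus_distr_l, IHM. rewrite S_INR.
 replace ((INR M + 1)*th - th/2) with (INR M*th + th/2) by field.
 rewrite sin_plus, sin_minus. ring. Qed.

Lemma tele_sin th M : 2*sin(th/2) * sm M (fun j => sin(INR j*th)) = cos(th/2) - cos(INR M*th - th/2).
Proof. induction M. simpl. replace (0*th - th/2) with (-(th/2)) by ring. rewrite cos_neg. lra.
 cbn[sm]. rewrite Rmult_plus_distr_l, IHM. rewrite S_INR.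
 replace ((INR M + 1)*th - th/2) with (INR M*th + th/2) by field.
 rewrite cos_plus, cos_minus. ring. Qed.

Lemma sin_2pi_int z : sin (IZR z * (2*PI)) = 0.
Proof. apply sin_eq_0_1. exists (2*z)%Z. rewrite mult_IZR. simpl. ring. Qed.

Lemma cos_2pi_int z : cos (IZR z * (2*PI)) = 1.
Proof. replace (IZR z * (2*PI)) with (2*(IZR z * PI)) by ring. rewrite cos_2a_sin.
 rewrite sin_eq_0_1. ring. exists z. auto. Qed.

Lemma angle p M j : IZR p * xg M j = INR j * (IZR p * 2 * PI / INR M).
Proof. unfold xg. unfold Rdiv. ring. Qed.

Lemma INR_M_pos M : (0 < M)%nat -> 0 < INR M.
Proof. intros; apply lt_0_INR; auto. Qed.

Lemma div_angle q M j : (0<M)%nat -> IZR (q * Z.of_nat M) * xg M j = IZR (q * Z.of_nat j) * (2*PI).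
Proof. intros H. assert (0 < INR M) by (apply INR_M_pos; auto). unfold xg.
 rewrite !mult_IZR, <- !INR_IZR_INZ. field. lra. Qed.

Lemma CS_div M p : (0<M)%nat -> (Z.of_nat M | p)%Z -> sm M (fun j => cz p (xg M j)) = INR M.
Proof. intros H [q ->]. rewrite (sm_ext M _ (fun _ => 1)). rewrite sm_const; ring.
 intros i _. unfold cz. rewrite div_angle by auto. apply cos_2pi_int. Qed.

Lemma sinhalf_nz M p : (0<M)%nat -> ~ (Z.of_nat M | p)%Z -> sin ((IZR p * 2 * PI / INR M)/2) <> 0.
Proof. intros H Hd Hs. assert (0 < INR M) by (apply INR_M_pos; auto).
 apply sin_eq_0_0 in Hs. destruct Hs as [k Hk]. apply Hd. exists k.
 apply eq_IZR. rewrite mult_IZR, <- INR_IZR_INZ.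
 assert (PI > 0) by apply PI_RGT_0.
 apply (Rmult_eq_reg_r (PI / INR M)). 2: { apply Rgt_not_eq. unfold Rdiv. apply Rmult_gt_0_compat; auto. apply Rinv_0_lt_compat; auto. }
 replace (IZR p * (PI / INR M)) with (IZR p * 2 * PI / INR M / 2) by (field; lra). rewrite Hk. field. lra. Qed.

Lemma CS_ndiv M p : (0<M)%nat -> ~ (Z.of_nat M | p)%Z -> sm M (fun j => cz p (xg M j)) = 0.
Proof. intros H Hd. set (th := IZR p * 2 * PI / INR M).
 assert (0 < INR M) by (apply INR_M_pos; auto).
 assert (E: sm M (fun j => cz p (xg M j)) = sm M (fun j => cos (INR j * th))).
 { apply sm_ext. intros. unfold cz. rewrite angle. reflexivity. }
 rewrite E. apply (Rmult_eq_reg_l (2 * sin (th/2))).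
 2: { intros Hc. apply (sinhalf_nz M p H Hd). fold th. lra. }
 rewrite tele_cos. replace (INR M * th) with (IZR p * (2*PI)) by (unfold th; field; lra).
 rewrite sin_minus, sin_2pi_int, cos_2pi_int. ring. Qed.

Lemma SS_zero M p : (0<M)%nat -> sm M (fun j => sz p (xg M j)) = 0.
Proof. intros H. assert (0 < INR M) by (apply INR_M_pos; auto).
 destruct (Zdivide_dec (Z.of_nat M) p) as [[q ->]|Hd].
 - apply sm_zero. intros i _. unfold sz. rewrite div_angle by auto. apply sin_2pi_int.
 - set (th := IZR p * 2 * PI / INR M).
 assert (E: sm M (fun j => sz p (xg M j)) = sm M (fun j => sin (INR j * th))).
 { apply sm_ext. intros. unfold sz. rewrite angle. reflexivity. }
 rewrite E. apply (Rmult_eq_reg_l (2 * sin (th/2))).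
 2: { intros Hc. apply (sinhalf_nz M p H Hd). fold th. lra. }
 rewrite tele_sin. replace (INR M * th) with (IZR p * (2*PI)) by (unfold th; field; lra).
 rewrite cos_minus, sin_2pi_int, cos_2pi_int. ring. Qed.

Definition Ac M p := Av M (cz p).

Lemma Ac_bounds M p : (0<M)%nat -> 0 <= Ac M p <= 1.
Proof. intros H. assert (0 < INR M) by (apply INR_M_pos; auto). unfold Ac, Av.
 destruct (Zdivide_dec (Z.of_nat M) p).
 - rewrite CS_div by auto. unfold Rdiv. rewrite Rinv_r; lra.
 - rewrite CS_ndiv by auto. unfold Rdiv. lra. Qed.

Lemma Ac_0 M : (0<M)%nat -> Ac M 0 = 1.
Proof. intros H. assert (0 < INR M) by (apply INR_M_pos; auto). unfold Ac, Av.
 rewrite CS_div by (auto; apply Z.divide_0_r). field. lra. Qed.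

Lemma Ac_small M p : (0<M)%nat -> (0 < Z.abs p < Z.of_nat M)%Z -> Ac M p = 0.
Proof. intros H Hp. unfold Ac, Av. rewrite CS_ndiv. unfold Rdiv; ring.
 auto. intros Hd. apply Zdivide_bounds in Hd. lia. lia. Qed.

Lemma As_0 M p : (0<M)%nat -> Av M (sz p) = 0.
Proof. intros H. unfold Av. rewrite SS_zero by auto. unfold Rdiv; ring. Qed.

Lemma Av_ext M h1 h2 : (forall x, h1 x = h2 x) -> Av M h1 = Av M h2.
Proof. intros H. unfold Av. f_equal. apply sm_ext. intros; apply H. Qed.
Lemma Av_plus M h1 h2 : Av M (fun x => h1 x + h2 x) = Av M h1 + Av M h2.
Proof. unfold Av. rewrite sm_plus. unfold Rdiv; ring. Qed.
Lemma Av_scal M a h : Av M (fun x => a * h x) = a * Av M h.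
Proof. unfold Av. rewrite sm_scal. unfold Rdiv; ring. Qed.
Lemma Av_sm M n F : Av M (fun x => sm n (fun i => F i x)) = sm n (fun i => Av M (F i)).
Proof. unfold Av. rewrite sm_swap. unfold Rdiv. rewrite Rmult_comm, <- sm_scal. apply sm_ext. intros; ring. Qed.
Lemma Av_le M h1 h2 : (0<M)%nat -> (forall x, h1 x <= h2 x) -> Av M h1 <= Av M h2.
Proof. intros H H2. assert (0 < INR M) by (apply INR_M_pos; auto). unfold Av, Rdiv.
 apply Rmult_le_compat_r. left; apply Rinv_0_lt_compat; auto. apply sm_le. intros; auto. Qed.
Lemma Av_abs M h : (0<M)%nat -> Rabs (Av M h) <= Av M (fun x => Rabs (h x)).
Proof. intros H. assert (0 < INR M) by (apply INR_M_pos; auto). unfold Av, Rdiv.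
 rewrite Rabs_mult, (Rabs_right (/ INR M)). apply Rmult_le_compat_r. left; apply Rinv_0_lt_compat; auto.
 apply sm_abs. left; apply Rinv_0_lt_compat; auto. Qed.
Lemma Av_const M a : (0<M)%nat -> Av M (fun _ => a) = a.
Proof. intros H. assert (0 < INR M) by (apply INR_M_pos; auto). unfold Av. rewrite sm_const. field. lra. Qed.

Lemma cz_cz p q x : cz p x * cz q x = /2 * (cz (p+q) x + cz (p-q) x).
Proof. unfold cz. rewrite plus_IZR, minus_IZR. rewrite !Rmult_plus_distr_r, Rmult_minus_distr_r.
 rewrite cos_plus, cos_minus. field. Qed.
Lemma sz_cz p q x : sz p x * cz q x = /2 * (sz (p+q) x + sz (p-q) x).
Proof. unfold cz, sz. rewrite plus_IZR, minus_IZR. rewrite !Rmult_plus_distr_r, Rmult_minus_distr_r.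
 rewrite sin_plus, sin_minus. field. Qed.

Definition rep (h : R -> R) := exists L (al : nat -> R) (p : nat -> Z),
  forall x, h x = sm L (fun i => al i * cz (p i) x).

Lemma rep_cz q : rep (cz q).
Proof. exists 1%nat, (fun _ => 1), (fun _ => q). intros x. simpl. ring. Qed.

Lemma rep_0 : rep (fun _ => 0).
Proof. exists 0%nat, (fun _ => 0), (fun _ => 0%Z). intros; simpl; auto. Qed.

Lemma rep_plus h1 h2 : rep h1 -> rep h2 -> rep (fun x => h1 x + h2 x).
Proof. intros [L1 [a1 [p1 H1]]] [L2 [a2 [p2 H2]]].
 exists (L1+L2)%nat, (fun i => if Nat.ltb i L1 then a1 i else a2 (i - L1)%nat),
   (fun i => if Nat.ltb i L1 then p1 i else p2 (i - L1)%nat).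
 intros x. rewrite sm_split, H1, H2. f_equal.
 - apply sm_ext. intros i Hi. destruct (Nat.ltb_spec i L1); [auto|lia].
 - apply sm_ext. intros i Hi. destruct (Nat.ltb_spec (L1+i) L1); [lia|].
   replace (L1 + i - L1)%nat with i by lia. auto. Qed.

Lemma rep_scal a h : rep h -> rep (fun x => a * h x).
Proof. intros [L [al [p H]]]. exists L, (fun i => a * al i), p. intros x. rewrite H, <- sm_scal.
 apply sm_ext; intros; ring. Qed.

Lemma rep_ext h1 h2 : (forall x, h1 x = h2 x) -> rep h1 -> rep h2.
Proof. intros E [L [al [p H]]]. exists L, al, p. intros x. rewrite <- E; auto. Qed.

Lemma rep_sm n F : (forall i, rep (F i)) -> rep (fun x => sm n (fun i => F i x)).
Proof. intros HF. induction n; simpl. apply rep_0. apply rep_plus; auto. Qed.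

Lemma rep_const a : rep (fun _ => a).
Proof. apply (rep_ext (fun x => a * cz 0 x)). intros x; unfold cz; simpl. rewrite Rmult_0_l, cos_0; ring.
 apply rep_scal, rep_cz. Qed.

Lemma sm_mulr n f u : sm n f * u = sm n (fun i => f i * u).
Proof. rewrite Rmult_comm, <- sm_scal. apply sm_ext; intros; ring. Qed.

Lemma rep_mul_cz h q : rep h -> rep (fun x => h x * cz q x).
Proof. intros [L [al [p H]]].
 apply (rep_ext (fun x => sm L (fun i => al i * / 2 * cz (p i + q) x + al i * /2 * cz (p i - q) x))).
 - intros x. symmetry. rewrite H, sm_mulr. apply sm_ext. intros i _. rewrite Rmult_assoc, (cz_cz (p i) q x). ring.
 - apply rep_sm. intros i. apply rep_plus; apply rep_scal; apply rep_cz. Qed.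

Lemma rep_sin M h k : (0<M)%nat -> rep h -> Av M (fun x => h x * sz k x) = 0.
Proof. intros HM [L [al [p H]]].
 rewrite (Av_ext M _ (fun x => sm L (fun i => al i * /2 * sz (k + p i) x + al i * /2 * sz (k - p i) x))).
 - rewrite Av_sm. apply sm_zero. intros i _. rewrite Av_plus, !Av_scal, !As_0 by auto. ring.
 - intros x. rewrite H, sm_mulr. apply sm_ext. intros. rewrite Rmult_assoc, (Rmult_comm (cz _ _)), (sz_cz k (p i) x). ring. Qed.

Lemma cos_cz k x : cos (INR k * x) = cz (Z.of_nat k) x.
Proof. unfold cz. rewrite INR_IZR_INZ. auto. Qed.
Lemma sin_sz k x : sin (INR k * x) = sz (Z.of_nat k) x.
Proof. unfold sz. rewrite INR_IZR_INZ. auto. Qed.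

Lemma Av_T M h n (a b : nat -> R) T : (0<M)%nat -> rep h ->
  (forall x, T x = a O + sum_n_m (fun k => a k * cos (INR k * x) + b k * sin (INR k * x)) 1 n) ->
  Av M (fun x => h x * T x) = a O * Av M h + sm n (fun i => a (S i) * Av M (fun x => h x * cz (Z.of_nat (S i)) x)).
Proof. intros HM Hh HT.
 rewrite (Av_ext M _ (fun x => a O * h x + sm n (fun i => a (S i) * (h x * cz (Z.of_nat (S i)) x) + b (S i) * (h x * sz (Z.of_nat (S i)) x)))).
 - rewrite Av_plus, Av_scal, Av_sm. f_equal. apply sm_ext. intros i _.
   rewrite Av_plus, !Av_scal. rewrite rep_sin by auto. ring.
 - intros x. rewrite HT, sum_n_m_sm. replace (S n - 1)%nat with n by lia.
   rewrite Rmult_plus_distr_l. f_equal. ring. rewrite Rmult_comm, sm_mulr. apply sm_ext. intros i _.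
   simpl (1 + i)%nat. rewrite cos_cz, sin_sz. ring. Qed.

Lemma is_series_zero : is_series (fun _ : nat => 0) 0.
Proof. unfold is_series. apply (filterlim_ext (fun _ => 0)). intros n. unfold sum_n. symmetry. apply (sum_n_m_const_zero (G:=R_AbelianMonoid)).
apply filterlim_const. Qed.

Lemma is_series_Rplus a b la lb : is_series a la -> is_series b lb -> is_series (fun n => a n + b n) (la + lb).
Proof. intros. apply (is_series_plus a b la lb); auto. Qed.

Lemma is_series_Rscal c a l : is_series a l -> is_series (fun n => c * a n) (c * l).
Proof. intros. apply (is_series_scal_l c a l); auto. Qed.

Lemma Av_f M h (c : nat -> R) f : (0<M)%nat -> (forall x, is_series (fun k => c k * cos (INR k * x)) (f x)) ->
  is_series (fun k => c k * Av M (fun x => h x * cz (Z.of_nat k) x)) (Av M (fun x => h x * f x)).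
Proof. intros HM Hf.
 assert (forall m, is_series (fun k => sm m (fun j => c k * (h (xg M j) * cos (INR k * xg M j)))) (sm m (fun j => h (xg M j) * f (xg M j)))).
 { induction m; simpl. apply is_series_zero. apply is_series_Rplus; auto.
   apply (is_series_ext (fun k => h (xg M m) * (c k * cos (INR k * xg M m)))).
   intros; simpl; ring. apply is_series_Rscal. auto. }
 unfold Av. apply (is_series_ext (fun k => / INR M * sm M (fun j => c k * (h (xg M j) * cos (INR k * xg M j))))).
 - intros k. unfold Rdiv.
   match goal with |- _ = c k * (?S * / INR M) => replace (c k * (S * / INR M)) with (/ INR M * (c k * S)) by ring end.
   f_equal. rewrite <- sm_scal. apply sm_ext. intros. rewrite cos_cz. ring.
 - unfold Rdiv. rewrite Rmult_comm. apply is_series_Rscal. auto. Qed.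

Definition Dk (s : nat) (x : R) := 1 + 2 * sm s (fun a => cz (Z.of_nat (S a)) x).
Definition Gk (RR : nat) (x : R) := sm RR (fun s => Dk s x).

Lemma rep_Dk s : rep (Dk s).
Proof. unfold Dk. apply rep_plus. apply rep_const. apply rep_scal. apply rep_sm. intros; apply rep_cz. Qed.
Lemma rep_Gk RR : rep (Gk RR).
Proof. unfold Gk. apply rep_sm. intros; apply rep_Dk. Qed.

Lemma Gk_sq RR x : Gk RR x = (sm RR (fun a => cz (Z.of_nat a) x))^2 + (sm RR (fun a => sz (Z.of_nat a) x))^2.
Proof. induction RR. unfold Gk; simpl; ring.
 unfold Gk in *. cbn [sm]. rewrite IHRR. unfold Dk.
 assert (E: sm RR (fun a => cz (Z.of_nat (S a)) x) = sm RR (fun a => cz (Z.of_nat a) x) * cz (Z.of_nat RR) x + sm RR (fun a => sz (Z.of_nat a) x) * sz (Z.of_nat RR) x).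
 { rewrite !sm_mulr, <- sm_plus. rewrite (sm_rev RR (fun i => _ + _)).
   apply sm_ext. intros i Hi. unfold cz, sz. rewrite (Rmult_comm (cos _)), (Rmult_comm (sin _)), <- cos_minus.
   rewrite <- Rmult_minus_distr_r, <- minus_IZR. f_equal. f_equal. f_equal. lia. }
 rewrite E. assert (H1 := sin2_cos2 (IZR (Z.of_nat RR) * x)). unfold Rsqr in H1.
 change (cos (IZR (Z.of_nat RR) * x)) with (cz (Z.of_nat RR) x) in H1.
 change (sin (IZR (Z.of_nat RR) * x)) with (sz (Z.of_nat RR) x) in H1.
 set (P := sm RR (fun a => cz (Z.of_nat a) x)) in *. set (Q := sm RR (fun a => sz (Z.of_nat a) x)) in *.
 set (u := cz (Z.of_nat RR) x) in *. set (v := sz (Z.of_nat RR) x) in *.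
 set (GG := sm RR (fun s => 1 + 2 * sm s (fun a => cz (Z.of_nat (S a)) x))) in *.
 transitivity (P^2+Q^2 + (v*v+u*u) + 2*(P*u+Q*v)). rewrite H1; ring. ring. Qed.

Lemma Gk_nonneg RR x : 0 <= Gk RR x.
Proof. rewrite Gk_sq. nra. Qed.

Lemma cz_0 x : cz 0 x = 1.
Proof. unfold cz. rewrite Rmult_0_l. apply cos_0. Qed.

Lemma Av_Dk_cz M s k : (0<M)%nat ->
  Av M (fun x => Dk s x * cz k x) = Ac M k + sm s (fun a => Ac M (Z.of_nat (S a) + k) + Ac M (Z.of_nat (S a) - k)).
Proof. intros HM.
 rewrite (Av_ext M _ (fun x => cz k x + sm s (fun a => cz (Z.of_nat (S a) + k) x + cz (Z.of_nat (S a) - k) x))).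
 - rewrite Av_plus, Av_sm. f_equal. apply sm_ext. intros. rewrite Av_plus. reflexivity.
 - intros x. unfold Dk. rewrite Rmult_plus_distr_r, Rmult_1_l, Rmult_assoc, sm_mulr. f_equal.
   rewrite <- sm_scal. apply sm_ext. intros. rewrite cz_cz. field. Qed.

Lemma Av_Dk M s : (0<M)%nat -> (s < M)%nat -> Av M (Dk s) = 1.
Proof. intros HM Hs. rewrite (Av_ext M _ (fun x => Dk s x * cz 0 x)) by (intros; rewrite cz_0; ring).
 rewrite Av_Dk_cz by auto. rewrite Ac_0 by auto. rewrite sm_zero. ring.
 intros i Hi. rewrite !Ac_small; try lra; auto; lia. Qed.

Lemma Av_Gk M RR : (0<M)%nat -> (RR <= M)%nat -> Av M (Gk RR) = INR RR.
Proof. intros HM HR. unfold Gk. rewrite Av_sm. rewrite (sm_ext _ _ (fun _ => 1)). rewrite sm_const; ring.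
 intros i Hi. apply Av_Dk; auto; lia. Qed.

Lemma cz4 p q r x : 4 * cz p x * cz q x * cz r x = cz (p+q+r) x + cz (p+q-r) x + cz (p-q+r) x + cz (p-q-r) x.
Proof. replace (4 * cz p x * cz q x * cz r x) with (4 * ((cz p x * cz q x) * cz r x)) by ring.
 rewrite cz_cz, Rmult_assoc, Rmult_plus_distr_r, !cz_cz. field. Qed.

Lemma Av_cDk M N s k : (0<M)%nat ->
  Av M (fun x => 2 * cz N x * Dk s x * cz k x) = Ac M (N + k) + Ac M (N - k) +
    sm s (fun a => Ac M (N + Z.of_nat (S a) + k) + Ac M (N + Z.of_nat (S a) - k) + Ac M (N - Z.of_nat (S a) + k) + Ac M (N - Z.of_nat (S a) - k)).
Proof. intros HM.
 rewrite (Av_ext M _ (fun x => cz (N+k) x + cz (N-k) x + sm s (fun a => cz (N + Z.of_nat (S a) + k) x + cz (N + Z.of_nat (S a) - k) x + cz (N - Z.of_nat (S a) + k) x + cz (N - Z.of_nat (S a) - k) x))).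
 - rewrite !Av_plus, Av_sm. f_equal. apply sm_ext. intros. rewrite !Av_plus. reflexivity.
 - intros x. unfold Dk.
   replace (2 * cz N x * (1 + 2 * sm s (fun a => cz (Z.of_nat (S a)) x)) * cz k x) with
     (2 * (cz N x * cz k x) + sm s (fun a => cz (Z.of_nat (S a)) x) * (4 * cz N x * cz k x)) by ring.
   rewrite sm_mulr, cz_cz. f_equal. field. apply sm_ext. intros. rewrite <- cz4. ring. Qed.

Lemma Ac_nonneg M p : (0<M)%nat -> 0 <= Ac M p.
Proof. intros; apply Ac_bounds; auto. Qed.

Lemma Av_Dk_val M SS k : (0<M)%nat -> (SS + k < M)%nat ->
  Av M (fun x => Dk SS x * cz (Z.of_nat k) x) = (if Nat.eqb k 0 then 1 else 0) + (if andb (Nat.leb 1 k) (Nat.leb k SS) then 1 else 0).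
Proof. intros HM Hk. rewrite Av_Dk_cz by auto. f_equal.
 - destruct (Nat.eqb_spec k 0). subst. apply Ac_0; auto. apply Ac_small; auto; lia.
 - rewrite <- sm_ind. apply sm_ext. intros a Ha. rewrite (Ac_small M (Z.of_nat (S a) + Z.of_nat k)) by (auto; lia).
   destruct (Nat.eqb_spec (S a) k).
   + replace (Z.of_nat (S a) - Z.of_nat k)%Z with 0%Z by lia. rewrite Ac_0; auto; ring.
   + rewrite Ac_small; auto; try lra; lia. Qed.

Lemma Av_Dk_bnd M SS k : (0<M)%nat -> 0 <= Av M (fun x => Dk SS x * cz k x) <= 1 + 2 * INR SS.
Proof. intros HM. rewrite Av_Dk_cz by auto. destruct (Ac_bounds M k HM). split.
 - assert (0 <= sm SS (fun a => Ac M (Z.of_nat (S a) + k) + Ac M (Z.of_nat (S a) - k))).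
   { apply sm_nonneg. intros. pose proof (Ac_nonneg M (Z.of_nat (S i) + k) HM). pose proof (Ac_nonneg M (Z.of_nat (S i) - k) HM). lra. }
   lra.
 - assert (sm SS (fun a => Ac M (Z.of_nat (S a) + k) + Ac M (Z.of_nat (S a) - k)) <= sm SS (fun _ => 2)).
   { apply sm_le. intros. pose proof (Ac_bounds M (Z.of_nat (S i) + k) HM). pose proof (Ac_bounds M (Z.of_nat (S i) - k) HM). lra. }
   rewrite sm_const in H1. lra. Qed.

Lemma Av_cDk_nonneg M N s k : (0<M)%nat -> 0 <= Av M (fun x => 2 * cz N x * Dk s x * cz k x).
Proof. intros HM. rewrite Av_cDk by auto.
 assert (0 <= sm s (fun a => Ac M (N + Z.of_nat (S a) + k) + Ac M (N + Z.of_nat (S a) - k) + Ac M (N - Z.of_nat (S a) + k) + Ac M (N - Z.of_nat (S a) - k))).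
 { apply sm_nonneg. intros. pose proof (Ac_nonneg M (N + Z.of_nat (S i) + k) HM). pose proof (Ac_nonneg M (N + Z.of_nat (S i) - k) HM).
   pose proof (Ac_nonneg M (N - Z.of_nat (S i) + k) HM). pose proof (Ac_nonneg M (N - Z.of_nat (S i) - k) HM). lra. }
 pose proof (Ac_nonneg M (N + k) HM). pose proof (Ac_nonneg M (N - k) HM). lra. Qed.

Lemma Av_cDk_zero M N s n k : (0<M)%nat -> (n + s < N)%nat -> (N + s + n < M)%nat -> (k <= n)%nat ->
  Av M (fun x => 2 * cz (Z.of_nat N) x * Dk s x * cz (Z.of_nat k) x) = 0.
Proof. intros HM H1 H2 H3. rewrite Av_cDk by auto.
 rewrite sm_zero. rewrite !Ac_small; auto; try lra; lia.
 intros a Ha. rewrite !Ac_small; auto; try lra; lia. Qed.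

Lemma Av_cDk_ge1 M N s k : (0<M)%nat -> (k <= N + s)%nat -> (N <= k + s)%nat ->
  1 <= Av M (fun x => 2 * cz (Z.of_nat N) x * Dk s x * cz (Z.of_nat k) x).
Proof. intros HM H1 H2. rewrite Av_cDk by auto.
 set (F := fun a => Ac M (Z.of_nat N + Z.of_nat (S a) + Z.of_nat k) + Ac M (Z.of_nat N + Z.of_nat (S a) - Z.of_nat k) + Ac M (Z.of_nat N - Z.of_nat (S a) + Z.of_nat k) + Ac M (Z.of_nat N - Z.of_nat (S a) - Z.of_nat k)).
 assert (HF: forall a, 0 <= F a).
 { intros. unfold F. pose proof (Ac_nonneg M (Z.of_nat N + Z.of_nat (S a) + Z.of_nat k) HM). pose proof (Ac_nonneg M (Z.of_nat N + Z.of_nat (S a) - Z.of_nat k) HM).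
   pose proof (Ac_nonneg M (Z.of_nat N - Z.of_nat (S a) + Z.of_nat k) HM). pose proof (Ac_nonneg M (Z.of_nat N - Z.of_nat (S a) - Z.of_nat k) HM). lra. }
 assert (0 <= sm s F) by (apply sm_nonneg; auto).
 pose proof (Ac_nonneg M (Z.of_nat N + Z.of_nat k) HM). pose proof (Ac_nonneg M (Z.of_nat N - Z.of_nat k) HM).
 destruct (lt_eq_lt_dec k N) as [[Hlt|Heq]|Hgt].
 - assert (1 <= F (N - k - 1)%nat).
   { unfold F. replace (Z.of_nat N - Z.of_nat (S (N - k - 1)) - Z.of_nat k)%Z with 0%Z by lia. rewrite Ac_0 by auto.
     pose proof (Ac_nonneg M (Z.of_nat N + Z.of_nat (S (N-k-1)) + Z.of_nat k) HM). pose proof (Ac_nonneg M (Z.of_nat N + Z.of_nat (S (N-k-1)) - Z.of_nat k) HM).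
     pose proof (Ac_nonneg M (Z.of_nat N - Z.of_nat (S (N-k-1)) + Z.of_nat k) HM). lra. }
   assert (F (N - k - 1)%nat <= sm s F) by (apply sm_single; auto; lia). lra.
 - subst. replace (Z.of_nat N - Z.of_nat N)%Z with 0%Z by lia. rewrite Ac_0 by auto. lra.
 - assert (1 <= F (k - N - 1)%nat).
   { unfold F. replace (Z.of_nat N + Z.of_nat (S (k - N - 1)) - Z.of_nat k)%Z with 0%Z by lia. rewrite Ac_0 by auto.
     pose proof (Ac_nonneg M (Z.of_nat N + Z.of_nat (S (k-N-1)) + Z.of_nat k) HM). pose proof (Ac_nonneg M (Z.of_nat N - Z.of_nat (S (k-N-1)) - Z.of_nat k) HM).
     pose proof (Ac_nonneg M (Z.of_nat N - Z.of_nat (S (k-N-1)) + Z.of_nat k) HM). lra. }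
   assert (F (k - N - 1)%nat <= sm s F) by (apply sm_single; auto; lia). lra. Qed.

Lemma series_ge_partial u l J : is_series u l -> (forall k, 0 <= u k) -> sum_n u J <= l.
Proof. intros H Hu. apply (is_lim_seq_incr_compare (sum_n u) l H). intros n.
 rewrite !sum_n_sm. cbn [sm]. cbn [sm] in *. pose proof (Hu (S n)). lra. Qed.

Lemma series_ge_ev u l L X : is_series u l -> (forall q, (L <= q)%nat -> X <= sum_n u q) -> X <= l.
Proof. intros H HX. assert (Hl: is_lim_seq (sum_n u) l) by exact H.
 assert (Rbar_le X l). { apply (is_lim_seq_le_loc (fun _ => X) (sum_n u)); auto. exists L. auto. apply is_lim_seq_const. }
 exact H0. Qed.

Lemma le_eps x y : (forall eps, 0 < eps -> x <= y + eps) -> x <= y.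
Proof. intros H. destruct (Rle_dec x y); auto. assert (x <= y + (x - y)/2) by (apply H; lra). lra. Qed.

Lemma cz_abs p x : Rabs (cz p x) <= 1.
Proof. unfold cz. apply Rabs_le. split; [apply COS_bound|apply COS_bound]. Qed.

Lemma Av_bound_g M h g e B : (0<M)%nat -> (forall x, Rabs (g x) <= e) -> (forall x, Rabs (h x) <= B x) ->
  Rabs (Av M (fun x => h x * g x)) <= e * Av M B.
Proof. intros HM Hg Hh. eapply Rle_trans. apply Av_abs; auto. rewrite <- Av_scal. apply Av_le; auto.
 intros x. rewrite Rabs_mult. specialize (Hg x). specialize (Hh x). assert (0 <= Rabs (g x)) by apply Rabs_pos.
 assert (0 <= Rabs (h x)) by apply Rabs_pos. nra. Qed.

Lemma window (c : nat -> R) f T (a b : nat -> R) n e t N :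
 (forall k, (1<=k)%nat -> 0 <= c k) ->
 (forall x, is_series (fun k => c k * cos (INR k * x)) (f x)) ->
 (forall x, T x = a O + sum_n_m (fun k => a k * cos (INR k * x) + b k * sin (INR k * x)) 1 n) ->
 (forall x, Rabs (f x - T x) <= e) ->
 (n + 2*t < N)%nat ->
 sm (2*t+1) (fun j => c (N - t + j)%nat) <= 4 * e.
Proof. intros Hc Hf HT Hg HN.
 set (r := (2*t)%nat). set (M := (N + r + n + 1)%nat). assert (HM: (0 < M)%nat) by lia.
 set (h := fun x => 2 * cz (Z.of_nat N) x * Gk (S r) x).
 assert (Hrep: rep h).
 { apply (rep_ext (fun x => 2 * (Gk (S r) x * cz (Z.of_nat N) x))). intros; unfold h; ring.
   apply rep_scal, rep_mul_cz, rep_Gk. }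
 set (wt := fun k : nat => Av M (fun x => h x * cz (Z.of_nat k) x)).
 assert (Hwt: forall k, wt k = sm (S r) (fun s => Av M (fun x => 2 * cz (Z.of_nat N) x * Dk s x * cz (Z.of_nat k) x))).
 { intros k. unfold wt. rewrite <- Av_sm. apply Av_ext. intros x. unfold h, Gk.
   transitivity (sm (S r) (fun s => Dk s x) * (2 * cz (Z.of_nat N) x * cz (Z.of_nat k) x)). ring.
   rewrite sm_mulr. apply sm_ext. intros; ring. }
 assert (Hwt0: forall k, (k <= n)%nat -> wt k = 0).
 { intros k Hk. rewrite Hwt. apply sm_zero. intros s Hs. apply (Av_cDk_zero M N s n k); auto; unfold M, r in *; lia. }
 assert (Hwtp: forall k, 0 <= wt k).
 { intros k. rewrite Hwt. apply sm_nonneg. intros. apply Av_cDk_nonneg; auto. }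
 assert (Hwt1: forall j, (j < 2*t+1)%nat -> INR t + 1 <= wt (N - t + j)%nat).
 { intros j Hj. rewrite Hwt. unfold r. replace (S (2*t)) with (t + (t+1))%nat by lia. rewrite sm_split.
   assert (0 <= sm t (fun s => Av M (fun x => 2 * cz (Z.of_nat N) x * Dk s x * cz (Z.of_nat (N - t + j)) x))).
   { apply sm_nonneg. intros. apply Av_cDk_nonneg; auto. }
   assert (sm (t+1) (fun _ => 1) <= sm (t+1) (fun i => Av M (fun x => 2 * cz (Z.of_nat N) x * Dk (t+i) x * cz (Z.of_nat (N - t + j)) x))).
   { apply sm_le. intros i Hi. apply Av_cDk_ge1; auto; lia. }
   rewrite sm_const, plus_INR in H0. simpl INR in H0. lra. }
 assert (He: 0 <= e). { specialize (Hg 0). pose proof (Rabs_pos (f 0 - T 0)). lra. }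
 assert (HAvT: Av M (fun x => h x * T x) = 0).
 { rewrite (Av_T M h n a b T HM Hrep HT). rewrite sm_zero.
   replace (Av M h) with (wt O). rewrite Hwt0 by lia. ring.
   unfold wt. apply Av_ext. intros; rewrite cz_0; ring.
   intros i Hi. fold (wt (S i)). rewrite Hwt0 by lia. ring. }
 assert (Hs := Av_f M h c f HM Hf). fold wt in Hs.
 assert (Hsplit: Av M (fun x => h x * f x) = Av M (fun x => h x * (f x - T x)) + Av M (fun x => h x * T x)).
 { rewrite <- Av_plus. apply Av_ext. intros; ring. }
 assert (Hb: Rabs (Av M (fun x => h x * (f x - T x))) <= e * Av M (fun x => 2 * Gk (S r) x)).
 { apply Av_bound_g; auto. intros x. unfold h. rewrite !Rabs_mult. rewrite (Rabs_right 2) by lra.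
   rewrite (Rabs_right (Gk _ x)) by (apply Rle_ge, Gk_nonneg). pose proof (cz_abs (Z.of_nat N) x). pose proof (Gk_nonneg (S r) x). nra. }
 rewrite Av_scal, Av_Gk in Hb by (auto; unfold M; lia).
 assert (Hpart: sum_n (fun k => c k * wt k) (N + t) <= Av M (fun x => h x * f x)).
 { apply series_ge_partial; auto. intros k. destruct k. rewrite Hwt0 by lia. lra. apply Rmult_le_pos; auto. apply Hc; lia. }
 rewrite sum_n_sm in Hpart. replace (S (N + t)) with ((N - t) + (2*t+1))%nat in Hpart by lia. rewrite sm_split in Hpart.
 assert (0 <= sm (N - t) (fun k => c k * wt k)).
 { apply sm_nonneg. intros k _. destruct k. rewrite Hwt0 by lia. lra. apply Rmult_le_pos; auto. apply Hc; lia. }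
 assert (sm (2*t+1) (fun j => c (N - t + j)%nat * (INR t + 1)) <= sm (2*t+1) (fun i => c (N - t + i)%nat * wt (N - t + i)%nat)).
 { apply sm_le. intros i Hi. apply Rmult_le_compat_l. apply Hc; lia. apply Hwt1; auto. }
 rewrite <- sm_mulr in H0.
 set (SS := sm (2 * t + 1) (fun j => c (N - t + j)%nat)) in *.
 rewrite Hsplit, HAvT in Hpart. pose proof (Rle_abs (Av M (fun x => h x * (f x - T x)))).
 unfold r in Hb. rewrite S_INR, mult_INR in Hb. simpl INR in Hb.
 assert (0 <= INR t) by apply pos_INR.
 assert (Hq: SS * (INR t + 1) <= e * (2 * ((1+1) * INR t + 1))). { eapply Rle_trans. apply H0. eapply Rle_trans. 2: apply Hb. eapply Rle_trans. 2: apply H1. lra. } assert (Hfin: (INR t + 1) * SS <= (INR t + 1) * (4 * e)) by nra.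
 apply Rmult_le_reg_l in Hfin. exact Hfin. lra. Qed.

Lemma pointeval (c : nat -> R) f T (a b : nat -> R) n e J :
 (1 <= n)%nat ->
 (forall k, (1<=k)%nat -> 0 <= c k) ->
 (forall x, is_series (fun k => c k * cos (INR k * x)) (f x)) ->
 (forall x, T x = a O + sum_n_m (fun k => a k * cos (INR k * x) + b k * sin (INR k * x)) 1 n) ->
 (forall x, Rabs (f x - T x) <= e) ->
 sm J (fun j => c (2*n + j)%nat) <= 4 * e.
Proof. intros Hn Hc Hf HT Hg.
 assert (Hc0: is_series c (f 0)).
 { apply (is_series_ext (fun k => c k * cos (INR k * 0)) c (f 0)). intros k; simpl; rewrite Rmult_0_r, cos_0; ring. auto. }
 assert (HnR: 0 < INR n) by (apply lt_0_INR; lia).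
 apply le_eps. intros eps Heps.
 assert (Hcau := Cauchy_ex_series c (ex_intro _ _ Hc0)).
 destruct (Hcau (mkposreal (eps / (4 * INR n)) ltac:(apply Rdiv_lt_0_compat; lra))) as [N0 HN0]. simpl in HN0.
 set (L := (N0 + 2*n + J + 1)%nat). set (M := (L + 2*n)%nat). assert (HM: (0<M)%nat) by lia.
 set (W := fun x => / INR n * sm n (fun s => Dk (n + s) x)).
 assert (Hrep: rep W). { apply rep_scal, rep_sm. intros; apply rep_Dk. }
 set (wW := fun k : nat => Av M (fun x => W x * cz (Z.of_nat k) x)).
 assert (HwW: forall k, wW k = / INR n * sm n (fun s => Av M (fun x => Dk (n + s) x * cz (Z.of_nat k) x))).
 { intros k. unfold wW. rewrite <- Av_sm, <- Av_scal. apply Av_ext. intros x. unfold W.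
   rewrite Rmult_assoc, sm_mulr. reflexivity. }
 assert (Hwp: forall k, 0 <= wW k <= 4 * INR n).
 { intros k. rewrite HwW. split.
   - apply Rmult_le_pos. left; apply Rinv_0_lt_compat; auto. apply sm_nonneg. intros. apply Av_Dk_bnd; auto.
   - assert (sm n (fun s => Av M (fun x => Dk (n + s) x * cz (Z.of_nat k) x)) <= sm n (fun _ => 4 * INR n)).
     { apply sm_le. intros s Hs. eapply Rle_trans. apply Av_Dk_bnd; auto. rewrite plus_INR.
       assert (INR s + 1 <= INR n) by (rewrite <- S_INR; apply le_INR; lia). lra. }
     rewrite sm_const in H. apply (Rmult_le_compat_l (/ INR n)) in H. 2: left; apply Rinv_0_lt_compat; auto.
     replace (/ INR n * (INR n * (4 * INR n))) with (4 * INR n) in H by (field; lra). auto. }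
 assert (Hwlow: forall k, (k <= n)%nat -> wW k = 1).
 { intros k Hk. rewrite HwW. rewrite (sm_ext _ _ (fun _ => 1)). rewrite sm_const. field; lra.
   intros s Hs. rewrite Av_Dk_val by (auto; unfold M, L; lia).
   destruct (Nat.eqb_spec k 0). subst. simpl. ring.
   replace (andb (Nat.leb 1 k) (Nat.leb k (n+s))) with true. ring.
   symmetry. apply andb_true_intro. split; apply Nat.leb_le; lia. }
 assert (Hwmid: forall k, (1 <= k)%nat -> (k < L)%nat -> wW k <= 1).
 { intros k Hk1 Hk2. rewrite HwW. assert (sm n (fun s => Av M (fun x => Dk (n + s) x * cz (Z.of_nat k) x)) <= sm n (fun _ => 1)).
   { apply sm_le. intros s Hs. rewrite Av_Dk_val by (auto; unfold M, L; lia).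
     destruct (Nat.eqb_spec k 0). lia. destruct (andb (Nat.leb 1 k) (Nat.leb k (n+s))); lra. }
   rewrite sm_const in H. apply (Rmult_le_compat_l (/ INR n)) in H. 2: left; apply Rinv_0_lt_compat; auto.
   replace (/ INR n * (INR n * 1)) with 1 in H by (field; lra). auto. }
 assert (Hwhigh: forall k, (2*n <= k)%nat -> (k < L)%nat -> wW k = 0).
 { intros k Hk1 Hk2. rewrite HwW. rewrite sm_zero. ring. intros s Hs. rewrite Av_Dk_val by (auto; unfold M, L; lia).
   destruct (Nat.eqb_spec k 0). lia. replace (andb (Nat.leb 1 k) (Nat.leb k (n+s))) with false. ring.
   symmetry. apply Bool.andb_false_iff. right. apply Nat.leb_gt. lia. }
 assert (HT0: T 0 = a O + sm n (fun i => a (S i))).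
 { rewrite HT, sum_n_m_sm. replace (S n - 1)%nat with n by lia. f_equal. apply sm_ext. intros.
   rewrite Rmult_0_r, cos_0, sin_0. simpl (1 + i)%nat. ring. }
 assert (HAvT: Av M (fun x => W x * T x) = T 0).
 { rewrite (Av_T M W n a b T HM Hrep HT). rewrite HT0. f_equal.
   replace (Av M W) with (wW O). rewrite Hwlow by lia. ring. unfold wW. apply Av_ext. intros; rewrite cz_0; ring.
   apply sm_ext. intros i Hi. fold (wW (S i)). rewrite Hwlow by lia. ring. }
 assert (Hs := Av_f M W c f HM Hf). fold wW in Hs.
 assert (Hu: is_series (fun k => c k * (1 - wW k)) (f 0 - Av M (fun x => W x * f x))).
 { apply (is_series_ext (fun k => c k + (-1) * (c k * wW k))). intros; simpl; ring.
   replace (f 0 - Av M (fun x => W x * f x)) with (f 0 + (-1) * Av M (fun x => W x * f x)) by ring.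
   apply is_series_Rplus; auto. apply is_series_Rscal; auto. }
 assert (Hlim: f 0 - Av M (fun x => W x * f x) <= 4 * e).
 { assert (E: f 0 - Av M (fun x => W x * f x) = (f 0 - T 0) - Av M (fun x => W x * (f x - T x))).
   { rewrite <- HAvT. rewrite (Av_ext M (fun x => W x * f x) (fun x => W x * (f x - T x) + W x * T x)) by (intros; ring).
     rewrite Av_plus. ring. }
   rewrite E.
   assert (Hb: Rabs (Av M (fun x => W x * (f x - T x))) <= e * Av M (fun x => / INR n * (Gk (2*n) x + Gk n x))).
   { apply Av_bound_g; auto. intros x. unfold W.
     assert (Esplit: sm n (fun s => Dk (n + s) x) = Gk (2*n) x - Gk n x).
     { unfold Gk. replace (2*n)%nat with (n+n)%nat by lia. rewrite sm_split. ring. }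
     rewrite Esplit, Rabs_mult, Rabs_right. 2: left; apply Rinv_0_lt_compat; auto.
     apply Rmult_le_compat_l. left; apply Rinv_0_lt_compat; auto.
     pose proof (Gk_nonneg (2*n) x). pose proof (Gk_nonneg n x). apply Rabs_le. lra. }
   rewrite Av_scal, Av_plus, !Av_Gk in Hb by (auto; unfold M, L; lia).
   replace (/ INR n * (INR (2*n) + INR n)) with 3 in Hb by (rewrite mult_INR; simpl INR; field; lra).
   pose proof (Hg 0). pose proof (Rle_abs (f 0 - T 0)). pose proof (Rle_abs (- Av M (fun x => W x * (f x - T x)))).
   rewrite Rabs_Ropp in H1. lra. }
 apply Rle_trans with (f 0 - Av M (fun x => W x * f x) + eps); [|lra].
 cut (sm J (fun j => c (2*n + j)%nat) - eps <= f 0 - Av M (fun x => W x * f x)). lra.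
 apply (series_ge_ev _ _ L _ Hu). intros q Hq.
 rewrite sum_n_sm. replace (S q) with (L + (S q - L))%nat by lia. rewrite sm_split.
 assert (Hu0: forall k, (k < L)%nat -> 0 <= c k * (1 - wW k)).
 { intros k Hk. destruct k. rewrite Hwlow by lia. lra. apply Rmult_le_pos. apply Hc; lia. pose proof (Hwmid (S k)). assert (wW (S k) <= 1) by (apply H; lia). lra. }
 assert (HA: sm J (fun j => c (2*n + j)%nat) <= sm L (fun k => c k * (1 - wW k))).
 { replace L with (2*n + (J + (N0 + 1)))%nat by (unfold L; lia). rewrite sm_split, (sm_split J (N0+1)).
   assert (0 <= sm (2*n) (fun k => c k * (1 - wW k))) by (apply sm_nonneg; intros; apply Hu0; unfold L; lia).
   assert (0 <= sm (N0 + 1) (fun i => c (2*n + (J + i))%nat * (1 - wW (2*n + (J+i))%nat))) by (apply sm_nonneg; intros; apply Hu0; unfold L; lia).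
   assert (sm J (fun j => c (2*n + j)%nat) = sm J (fun i => c (2*n + i)%nat * (1 - wW (2*n + i)%nat))).
   { apply sm_ext. intros i Hi. rewrite Hwhigh by (unfold L; lia). ring. }
   lra. }
 assert (HB: - eps <= sm (S q - L) (fun i => c (L + i)%nat * (1 - wW (L + i)%nat))).
 { assert (sm (S q - L) (fun i => (-(4 * INR n)) * c (L + i)%nat) <= sm (S q - L) (fun i => c (L + i)%nat * (1 - wW (L + i)%nat))).
   { apply sm_le. intros i Hi. assert (0 <= c (L+i)%nat) by (apply Hc; unfold L; lia). pose proof (Hwp (L+i)%nat). nra. }
   rewrite sm_scal in H. rewrite <- sum_n_m_sm in H.
   assert (Hx: norm (sum_n_m c L q) < eps / (4 * INR n)) by (apply HN0; unfold L; lia).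
   change (norm (sum_n_m c L q)) with (Rabs (sum_n_m c L q)) in Hx. pose proof (Rle_abs (sum_n_m c L q)).
   assert (4 * INR n * sum_n_m c L q <= eps).
   { replace eps with (4 * INR n * (eps / (4 * INR n))) by (field; lra). apply Rmult_le_compat_l; lra. }
   lra. }
 lra. Qed.

Lemma nbvs_pos (c : nat -> R) th0 : 0 <= th0 < PI/2 -> forall k, inM th0 (RtoC (c k)) -> 0 <= c k.
Proof. intros Hth k [H|[r [th [Hr [Hth' H]]]]].
 - apply (f_equal fst) in H. simpl in H. lra.
 - apply (f_equal fst) in H. simpl in H. rewrite H. apply Rmult_le_pos. lra.
   left. apply Rabs_le_between in Hth'. apply cos_gt_0; lra. Qed.

Lemma cmod_diff a b : Cmod (RtoC a - RtoC b)%C = Rabs (a - b).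
Proof. rewrite <- RtoC_minus. apply Cmod_R. Qed.

Lemma tele (c : nat -> R) a len : Rabs (c (a+len)%nat - c a) <= sm len (fun j => Rabs (c (a+j)%nat - c (a+j+1)%nat)).
Proof. induction len. rewrite Nat.add_0_r. unfold Rminus. rewrite Rplus_opp_r, Rabs_R0. simpl; lra.
 cbn [sm]. replace (c (a + S len)%nat - c a) with ((c (a+len)%nat - c a) - (c (a+len)%nat - c (a+len+1)%nat)).
 2: { replace (a + len + 1)%nat with (a + S len)%nat by lia. ring. }
 eapply Rle_trans. apply Rabs_triang. rewrite Rabs_Ropp. lra. Qed.

Lemma nbvs_key (c : nat -> R) K : (forall k, (1<=k)%nat -> 0 <= c k) ->
  (forall m, (1 <= m)%nat -> sum_n_m (fun n => Rabs (c n - c (S n))) m (2*m) <= K * (c m + c (2*m)%nat)) ->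
  forall i m, (1 <= i)%nat -> (i <= m)%nat -> (m <= 2*i)%nat ->
  2 * c m <= (K+1) * c i + K * c (2*i)%nat + c (2*i+1)%nat.
Proof. intros Hc HK i m H1 H2 H3. specialize (HK i H1). rewrite sum_n_m_sm in HK.
 replace (S (2*i) - i)%nat with ((m - i) + (2*i+1-m))%nat in HK by lia. rewrite sm_split in HK. cbv beta in HK.
 pose proof (tele c i (m - i)). pose proof (tele c m (2*i+1-m)).
 replace (i + (m - i))%nat with m in H by lia. replace (m + (2*i+1-m))%nat with (2*i+1)%nat in H0 by lia.
 assert (E1: sm (m - i) (fun j => Rabs (c (i+j)%nat - c (i+j+1)%nat)) = sm (m - i) (fun i0 => Rabs (c (i + i0)%nat - c (S (i + i0))))).
 { apply sm_ext; intros. f_equal. f_equal. f_equal. lia. }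
 assert (E2: sm (2*i+1-m) (fun j => Rabs (c (m+j)%nat - c (m+j+1)%nat)) = sm (2*i+1-m) (fun i0 => Rabs (c (i + (m - i + i0))%nat - c (S (i + (m - i + i0)))))).
 { apply sm_ext; intros. f_equal. f_equal. f_equal. lia. f_equal. lia. }
 rewrite E1 in H. rewrite E2 in H0.
 pose proof (Rle_abs (c m - c i)). pose proof (Rle_abs (c (2*i+1)%nat - c m)).
 pose proof (Rle_abs (c m - c (2*i+1)%nat)).
 assert (0 <= c i) by (apply Hc; lia). assert (0 <= c (2*i)%nat) by (apply Hc; lia). assert (0 <= c (2*i+1)%nat) by (apply Hc; lia).
 assert (Rabs (c m - c (2*i+1)%nat) <= sm (2*i+1-m) (fun i0 => Rabs (c (i + (m - i + i0))%nat - c (S (i + (m - i + i0)))))).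
 { rewrite Rabs_minus_sym. auto. }
 lra. Qed.

Lemma sm_pairs (g : nat -> R) a p : sm p (fun j => g (2*(a+j))%nat + g (2*(a+j)+1)%nat) = sm (2*p) (fun l => g (2*a + l)%nat).
Proof. induction p. simpl. auto. replace (2 * S p)%nat with (S (S (2*p))) by lia. cbn [sm]. rewrite IHp.
 replace (2*(a+p))%nat with (2*a + 2*p)%nat by lia. replace (2*a + 2*p + 1)%nat with (2*a + S (2*p))%nat by lia. ring. Qed.

Lemma exists_t k : (1 <= k)%nat -> exists t, (3*t+1 <= k <= 3*t+3)%nat.
Proof. intros H. exists ((k-1)/3)%nat. pose proof (Nat.div_mod_eq (k-1) 3). pose proof (Nat.mod_upper_bound (k-1) 3). lia. Qed.

Lemma fold_max_le (l : list R) x0 B : x0 <= B -> (forall y, In y l -> y <= B) -> fold_right Rmax x0 l <= B.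
Proof. induction l; simpl; intros; auto. apply Rmax_lub. apply H0; auto. apply IHl; auto. Qed.
Lemma fold_max_ge (l : list R) x0 : x0 <= fold_right Rmax x0 l.
Proof. induction l; simpl. lra. eapply Rle_trans. apply IHl. apply Rmax_r. Qed.

Lemma series_le_ev u l L X : is_series u l -> (forall q, (L <= q)%nat -> sum_n u q <= X) -> l <= X.
Proof. intros H HX. assert (Hl: is_lim_seq (sum_n u) l) by exact H.
 assert (Rbar_le l X). { apply (is_lim_seq_le_loc (sum_n u) (fun _ => X)); auto. exists L. auto. apply is_lim_seq_const. }
 exact H0. Qed.

Lemma kc_bound (c : nat -> R) f T (a b : nat -> R) n e K :
 (1 <= n)%nat -> 0 < K ->
 (forall k, (1<=k)%nat -> 0 <= c k) ->
 (forall m, (1 <= m)%nat -> sum_n_m (fun n => Rabs (c n - c (S n))) m (2*m) <= K * (c m + c (2*m)%nat)) ->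
 (forall x, is_series (fun k => c k * cos (INR k * x)) (f x)) ->
 (forall x, T x = a O + sum_n_m (fun k => a k * cos (INR k * x) + b k * sin (INR k * x)) 1 n) ->
 (forall x, Rabs (f x - T x) <= e) ->
 forall k, (1 <= k)%nat -> (k <= n)%nat -> INR k * c (n + k)%nat <= 12 * (K+1) * e.
Proof. intros Hn HK Hc HNB Hf HT Hg k Hk1 Hk2.
 destruct (exists_t k Hk1) as [t Ht].
 set (N' := (n + k - t)%nat).
 assert (HW := window c f T a b n e t N' Hc Hf HT Hg ltac:(unfold N'; lia)).
 set (m := (n + k)%nat).
 assert (Hkey: forall j, (j < 2*t+1)%nat -> 2 * c m <= (K+1) * c (N' - t + j)%nat + K * c (2*(N' - t + j))%nat + c (2*(N' - t + j)+1)%nat).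
 { intros j Hj. apply (nbvs_key c K Hc HNB); unfold N', m; lia. }
 assert (Hsum: sm (2*t+1) (fun _ => 2 * c m) <= sm (2*t+1) (fun j => (K+1) * c (N' - t + j)%nat + (K+1) * (c (2*(N' - t + j))%nat + c (2*(N' - t + j)+1)%nat))).
 { apply sm_le. intros j Hj. specialize (Hkey j Hj). assert (0 <= c (2*(N'-t+j))%nat) by (apply Hc; unfold N'; lia). assert (0 <= c (2*(N'-t+j)+1)%nat) by (apply Hc; unfold N'; lia). assert (0 <= K * c (2*(N'-t+j)+1)%nat) by (apply Rmult_le_pos; lra). lra. }
 rewrite sm_const, sm_plus, sm_scal, sm_scal in Hsum.
 rewrite (sm_pairs c (N' - t)) in Hsum.
 assert (HP: sm (2 * (2 * t + 1)) (fun l => c (2 * (N' - t) + l)%nat) <= 4 * e).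
 { set (d := (2*(N'-t) - 2*n)%nat).
   assert (HB := pointeval c f T a b n e (d + 2*(2*t+1)) Hn Hc Hf HT Hg). rewrite sm_split in HB.
   assert (0 <= sm d (fun j => c (2*n+j)%nat)) by (apply sm_nonneg; intros; apply Hc; lia).
   assert (E: sm (2 * (2 * t + 1)) (fun l => c (2 * (N' - t) + l)%nat) = sm (2 * (2 * t + 1)) (fun i => c (2 * n + (d + i))%nat)).
   { apply sm_ext. intros. f_equal. unfold d, N'. lia. }
   lra. }
 assert (Hcm: 0 <= c m) by (apply Hc; unfold m; lia).
 assert (HKe: 0 <= e). { specialize (Hg 0). pose proof (Rabs_pos (f 0 - T 0)). lra. }
 rewrite plus_INR, mult_INR in Hsum. simpl INR in Hsum.
 assert (Hleft: (2 * INR t + 1) * c m <= 4 * (K+1) * e) by nra.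
 assert (Hk: INR k <= 3 * (2 * INR t + 1)).
 { replace (3 * (2 * INR t + 1)) with (INR (3*(2*t+1))) by (rewrite mult_INR, plus_INR, mult_INR; simpl; ring).
   apply le_INR. lia. }
 assert (0 <= INR k) by apply pos_INR.
 fold m. nra. Qed.

Lemma supnorm_bound g e : supnorm g = Finite e -> forall x, Rabs (g x) <= e.
Proof. intros H x. destruct (Lub_Rbar_correct (fun y => exists x, y = Rabs (g x))) as [Hub _].
 unfold supnorm in H. rewrite H in Hub. apply (Hub (Rabs (g x))). exists x; auto. Qed.

Lemma supnorm_le g B : (forall x, Rabs (g x) <= B) -> Rbar_le (supnorm g) (Finite B).
Proof. intros H. destruct (Lub_Rbar_correct (fun y => exists x, y = Rabs (g x))) as [_ Hlub].
 apply Hlub. intros y [x ->]. simpl. auto. Qed.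

Lemma core (c : nat -> R) f n K Ch e T (a b : nat -> R) :
 (1 <= n)%nat -> 0 < K ->
 (forall k, (1<=k)%nat -> 0 <= c k) ->
 (forall m, (1 <= m)%nat -> sum_n_m (fun n => Rabs (c n - c (S n))) m (2*m) <= K * (c m + c (2*m)%nat)) ->
 (forall x, is_series (fun k => c k * cos (INR k * x)) (f x)) ->
 Rabs (sum_n_m c (S n) (2 * n)) <= Ch * Rabs (maxkc c n) ->
 (forall x, T x = a O + sum_n_m (fun k => a k * cos (INR k * x) + b k * sin (INR k * x)) 1 n) ->
 (forall x, Rabs (f x - T x) <= e) ->
 forall x, Rabs (f x - Sn c n x) <= (Rabs Ch * (12 * (K+1)) + 4) * e.
Proof. intros Hn HK Hc HNB Hf Hh HT Hg x.
 assert (He: 0 <= e). { specialize (Hg 0). pose proof (Rabs_pos (f 0 - T 0)). lra. }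
 assert (Hkc := kc_bound c f T a b n e K Hn HK Hc HNB Hf HT Hg).
 assert (Hmax: 0 <= maxkc c n <= 12 * (K+1) * e).
 { unfold maxkc. split.
   - eapply Rle_trans. 2: apply fold_max_ge. apply Hc; lia.
   - apply fold_max_le.
     + replace (c (S n)) with (INR 1 * c (n + 1)%nat) by (simpl; replace (n+1)%nat with (S n) by lia; ring). apply Hkc; lia.
     + intros y Hy. apply in_map_iff in Hy. destruct Hy as [k [<- Hk]]. apply in_seq in Hk. apply Hkc; lia. }
 assert (HA: Rabs (sum_n_m c (S n) (2 * n)) <= Rabs Ch * (12 * (K+1) * e)).
 { eapply Rle_trans. apply Hh. rewrite (Rabs_right (maxkc c n)) by lra.
   eapply Rle_trans. apply Rmult_le_compat_r. lra. apply Rle_abs. apply Rmult_le_compat_l. apply Rabs_pos. lra. }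
 set (B := (Rabs Ch * (12 * (K+1)) + 4) * e).
 set (u := fun k => c k * cos (INR k * x)).
 assert (Htail: forall q, (2*n <= q)%nat -> Rabs (sum_n u q - Sn c n x) <= B).
 { intros q Hq. unfold Sn. fold u.
   assert (E: sum_n u q - sum_n u n = sum_n_m u (S n) q). { symmetry. apply (sum_n_m_sum_n (G:=R_AbelianGroup) u n q). lia. }
   rewrite E.
   rewrite sum_n_m_sm. replace (S q - S n)%nat with (n + (q - 2*n))%nat by lia.
   eapply Rle_trans. apply sm_abs.
   assert (sm (n + (q - 2*n)) (fun i => Rabs (u (S n + i)%nat)) <= sm (n + (q - 2*n)) (fun i => c (S n + i)%nat)).
   { apply sm_le. intros i Hi. unfold u. rewrite Rabs_mult, Rabs_right by (apply Rle_ge, Hc; lia).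
     assert (0 <= c (S n + i)%nat) by (apply Hc; lia). pose proof (COS_bound (INR (S n + i) * x)).
     assert (Rabs (cos (INR (S n + i) * x)) <= 1) by (apply Rabs_le; lra). nra. }
   eapply Rle_trans. apply H. rewrite sm_split.
   assert (E1: sm n (fun i => c (S n + i)%nat) = sum_n_m c (S n) (2*n)).
   { rewrite sum_n_m_sm. replace (S (2*n) - S n)%nat with n by lia. reflexivity. }
   assert (E2: sm (q - 2*n) (fun i => c (S n + (n + i))%nat) <= 4 * e).
   { assert (HB := pointeval c f T a b n e (S (q - 2*n)) Hn Hc Hf HT Hg). rewrite sm_shift in HB.
     assert (0 <= c (2*n+0)%nat) by (apply Hc; lia).
     assert (sm (q - 2*n) (fun i => c (S n + (n + i))%nat) = sm (q - 2*n) (fun i => c (2 * n + S i)%nat)).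
     { apply sm_ext. intros. f_equal. lia. }
     lra. }
   rewrite E1. pose proof (Rle_abs (sum_n_m c (S n) (2 * n))). unfold B.
   assert (Rabs Ch * (12 * (K+1) * e) = Rabs Ch * (12 * (K + 1)) * e) by ring. lra. }
 assert (Hfx: is_series u (f x)) by apply Hf.
 apply Rabs_le. split.
 - assert (Sn c n x - B <= f x). 2: lra.
   apply (series_ge_ev u (f x) (2*n)); auto. intros q Hq. specialize (Htail q Hq). apply Rabs_le_between in Htail.
   assert (HH: Sn c n x - B <= sum_n u q) by lra. exact HH.
 - assert (f x <= Sn c n x + B). 2: lra.
   apply (series_le_ev u (f x) (2*n)); auto. intros q Hq. specialize (Htail q Hq). apply Rabs_le_between in Htail.
   assert (HH: sum_n u q <= Sn c n x + B) by lra. exact HH.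
Qed.

Lemma mult_pinf C : 0 < C -> Rbar_mult (Finite C) p_infty = p_infty.
Proof. intros H. simpl. destruct (Rle_dec 0 C); [|lra]. destruct (Rle_lt_or_eq_dec 0 C r); auto. lra. Qed.

Theorem corollary1 (c : nat -> R) (f : R -> R) :
  NBVS (fun n => RtoC (c n)) ->
  (forall x : R, ex_series (fun k => c k * cos (INR k * x))) ->
  (forall x : R, f x = Series (fun k => c k * cos (INR k * x))) ->
  (forall x : R, continuous f x) ->
  (exists C : R, exists N : nat, forall n : nat, (N <= n)%nat ->
     Rabs (sum_n_m c (S n) (2 * n)) <= C * Rabs (maxkc c n)) ->
  exists C : R, exists N : nat, forall n : nat, (N <= n)%nat ->
    Rbar_le (supnorm (fun x => f x - Sn c n x)) (Rbar_mult (Finite C) (En n f)).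
Proof.
 intros [[th0 [Hth Hin]] [K [HK HNBc]]] Hex Hfeq _ [Ch [Nh Hh]].
 assert (Hc: forall k, (1 <= k)%nat -> 0 <= c k).
 { intros k Hk. apply (nbvs_pos c th0 Hth k (Hin k Hk)). }
 assert (HNB: forall m, (1 <= m)%nat -> sum_n_m (fun n => Rabs (c n - c (S n))) m (2*m) <= K * (c m + c (2*m)%nat)).
 { intros m Hm. specialize (HNBc m Hm).
   rewrite (sum_n_m_ext (fun n => Cmod (RtoC (c n) - RtoC (c (S n)))%C) (fun n => Rabs (c n - c (S n)))) in HNBc.
   2: { intros; apply cmod_diff. }
   rewrite !Cmod_R in HNBc. rewrite (Rabs_right (c m)), (Rabs_right (c (2*m)%nat)) in HNBc; auto.
   apply Rle_ge, Hc; lia. apply Rle_ge, Hc; lia. }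
 assert (Hf: forall x, is_series (fun k => c k * cos (INR k * x)) (f x)).
 { intros x. rewrite Hfeq. apply Series_correct. auto. }
 set (C := Rabs Ch * (12 * (K+1)) + 4).
 assert (HC: 0 < C). { unfold C. pose proof (Rabs_pos Ch). assert (0 <= Rabs Ch * (12 * (K+1))) by (apply Rmult_le_pos; lra). lra. }
 exists C, (max Nh 1). intros n Hn.
 set (g := fun x => f x - Sn c n x).
 set (E := fun e => exists T, trig_poly n T /\ supnorm (fun x => f x - T x) = Finite e).
 assert (Hkey: forall e, E e -> forall x, Rabs (g x) <= C * e).
 { intros e [T [[a [b HT]] Hs]] x. unfold g, C.
   apply (core c f n K Ch e T a b); auto; try lia.
   apply Hh; lia. apply supnorm_bound; auto. }
 assert (Hpos: forall e, E e -> 0 <= e).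
 { intros e [T [_ Hs]]. pose proof (supnorm_bound _ _ Hs 0). pose proof (Rabs_pos (f 0 - T 0)). lra. }
 unfold En. fold E. fold g.
 destruct (Glb_Rbar_correct E) as [Hlb Hglb].
 destruct (supnorm g) eqn:Hsn.
 - destruct (Glb_Rbar E) eqn:HG.
   + simpl. assert (Rbar_le (Finite (r / C)) (Finite r0)).
     { apply Hglb. intros e He. simpl.
       assert (Rbar_le (supnorm g) (Finite (C * e))) by (apply supnorm_le; apply Hkey; auto).
       rewrite Hsn in H. simpl in H. apply (Rmult_le_reg_l C); auto. replace (C * (r / C)) with r by (field; lra). auto. }
     simpl in H. apply (Rmult_le_compat_l C) in H; [|lra]. replace (C * (r / C)) with r in H by (field; lra). auto.
   + rewrite mult_pinf by auto. simpl. auto.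
   + exfalso. assert (Rbar_le (Finite 0) m_infty). { apply Hglb. intros e He. simpl. apply Hpos; auto. } simpl in H. auto.
 - assert (Rbar_le p_infty (Glb_Rbar E)).
   { apply Hglb. intros e He. exfalso. assert (Rbar_le (supnorm g) (Finite (C * e))) by (apply supnorm_le; apply Hkey; auto).
     rewrite Hsn in H. simpl in H. auto. }
   destruct (Glb_Rbar E); simpl in H; try contradiction. rewrite mult_pinf by auto. simpl. auto.
 - simpl. auto.
Qed.
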